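(* Let $R_0^*\in SO(3)$ and $x_1,\dots,x_\ell\in\mathbb{R}^3$. Then $$\lambda_{\min2}\Big(\sum_{i=1}^\ell P_i\Big)=\sum_{i=1}^\ell4\|x_i\|_2^2-\lambda_{\max}\Big(\sum_{i=1}^\ell4x_ix_i^\top\Big).$$
   Context: For $w=[w_1;w_2;w_3;w_4]\in\mathbb{S}^3$, $R(w)=\begin{bmatrix} w_1^2+w_2^2-w_3^2-w_4^2 & 2(w_2w_3-w_1w_4) & 2(w_2w_4+w_1w_3)\\ 2(w_2w_3+w_1w_4) & w_1^2+w_3^2-w_2^2-w_4^2 & 2(w_3w_4-w_1w_2)\\ 2(w_2w_4-w_1w_3) & 2(w_3w_4+w_1w_2) & w_1^2+w_4^2-w_2^2-w_3^2\end{bmatrix}\in SO(3)$. $P_i$ is the unique symmetric $4\times4$ matrix with $w^\top P_iw=\|R_0^*x_i-R(w)x_i\|_2^2$ for all $w\in\mathbb{S}^3$. $\lambda_{\min2}$ is the second smallest eigenvalue (counting multiplicity), $\lambda_{\max}$ the largest. *)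

(* Defs.v *)
From HB Require Import structures.
From mathcomp Require Import all_boot all_order all_algebra.
From mathcomp Require Import boolp reals.
Set Implicit Arguments. Unset Strict Implicit. Unset Printing Implicit Defensive.
Import Order.TTheory GRing.Theory Num.Theory.
Local Open Scope ring_scope.

Section Defs.
Variable R : realType.

(* The quaternion-parametrized rotation matrix R(w), w = [w1;w2;w3;w4]. *)
Definition quatR (w : 'cV[R]_4) : 'M[R]_3 :=
  let w1 := w (inord 0) 0 in let w2 := w (inord 1) 0 in
  let w3 := w (inord 2) 0 in let w4 := w (inord 3) 0 in
  \matrix_(i < 3, j < 3)
    match nat_of_ord i, nat_of_ord j with
    | 0, 0 => w1^+2 + w2^+2 - w3^+2 - w4^+2
    | 0, 1 => 2 * (w2 * w3 - w1 * w4)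
    | 0, _ => 2 * (w2 * w4 + w1 * w3)
    | 1, 0 => 2 * (w2 * w3 + w1 * w4)
    | 1, 1 => w1^+2 + w3^+2 - w2^+2 - w4^+2
    | 1, _ => 2 * (w3 * w4 - w1 * w2)
    | _, 0 => 2 * (w2 * w4 - w1 * w3)
    | _, 1 => 2 * (w3 * w4 + w1 * w2)
    | _, _ => w1^+2 + w4^+2 - w2^+2 - w3^+2
    end.

Definition sqnorm n (v : 'cV[R]_n) : R := \sum_(k < n) v k 0 ^+ 2.

Definition qform n (P : 'M[R]_n) (w : 'cV[R]_n) : R := (w^T *m P *m w) 0 0.

Definition is_SO3 (Q : 'M[R]_3) : Prop := Q^T *m Q = 1%:M /\ \det Q = 1.

Definition eigseq n (A : 'M[R]_n) (s : seq R) : bool :=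
  char_poly A == \prod_(a <- s) ('X - a%:P).

(* eigenvalues of A, counted with multiplicity, in nondecreasing order
   (the characteristic polynomial splits over R for symmetric A) *)
Definition eigvals n (A : 'M[R]_n) : seq R :=
  sort <=%R (match pselect (exists s, eigseq A s) with
             | left h => xchoose h
             | right _ => [::]
             end).

Definition lambda_min2 n (A : 'M[R]_n) : R := nth 0 (eigvals A) 1.
Definition lambda_max n (A : 'M[R]_n) : R := last 0 (eigvals A).

End Defs.

(* Main.v *)
Require Import Defs.
From HB Require Import structures.
From mathcomp Require Import all_boot all_order all_algebra.
From mathcomp Require Import boolp reals ring lra.
From mathcomp Require Import complex sesquilinear spectral.
Import Order.TTheory GRing.Theory Num.Theory.
Local Open Scope ring_scope.
Set Implicit Arguments. Unset Strict Implicit. Unset Printing Implicit Defensive.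

Section Gen.
Variable V : nmodType.
Lemma sum1 (F : 'I_1 -> V) : \sum_(i < 1) F i = F (inord 0).
Proof.
rewrite big_ord_recl big_ord0 addr0; congr F; apply/val_inj; by rewrite /= inordK.
Qed.
Lemma sum2 (F : 'I_2 -> V) : \sum_(i < 2) F i = F (inord 0) + F (inord 1).
Proof.
rewrite !big_ord_recl big_ord0 addr0; congr (F _ + F _); apply/val_inj; by rewrite /= inordK.
Qed.
Lemma sum3 (F : 'I_3 -> V) : \sum_(i < 3) F i = F (inord 0) + F (inord 1) + F (inord 2).
Proof.
rewrite !big_ord_recl big_ord0 addr0 addrA; congr (F _ + F _ + F _); apply/val_inj; by rewrite /= inordK.
Qed.
Lemma sum4 (F : 'I_4 -> V) : \sum_(i < 4) F i = F (inord 0) + F (inord 1) + F (inord 2) + F (inord 3).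
Proof.
rewrite !big_ord_recl big_ord0 addr0 !addrA; congr (F _ + F _ + F _ + F _); apply/val_inj; by rewrite /= inordK.
Qed.
End Gen.

Lemma lift_inord n i j : (i <= n.+1)%N -> (j <= n)%N ->
  lift (inord i : 'I_n.+2) (inord j : 'I_n.+1) = inord (bump i j).
Proof.
move=> hi hj; apply/val_inj; rewrite /= !inordK //.
by rewrite /bump; case: (i <= j)%N; rewrite ?add1n ?add0n //; apply: (leq_trans hj).
Qed.

Section Det.
Variable R : comNzRingType.
Lemma det2 (A : 'M[R]_2) : \det A =
  A (inord 0) (inord 0) * A (inord 1) (inord 1) - A (inord 0) (inord 1) * A (inord 1) (inord 0).
Proof.
rewrite (expand_det_row _ (inord 0)) sum2 /cofactor !det_mx11 !mxE.
have -> : (0 : 'I_1) = inord 0 by apply/val_inj; rewrite /= inordK.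
rewrite !lift_inord //= !inordK //=. ring.
Qed.
Lemma det3 (A : 'M[R]_3) : \det A =
  A (inord 0) (inord 0) * (A (inord 1) (inord 1) * A (inord 2) (inord 2) - A (inord 1) (inord 2) * A (inord 2) (inord 1))
- A (inord 0) (inord 1) * (A (inord 1) (inord 0) * A (inord 2) (inord 2) - A (inord 1) (inord 2) * A (inord 2) (inord 0))
+ A (inord 0) (inord 2) * (A (inord 1) (inord 0) * A (inord 2) (inord 1) - A (inord 1) (inord 1) * A (inord 2) (inord 0)).
Proof.
rewrite (expand_det_row _ (inord 0)) sum3 /cofactor !det2 !mxE.
rewrite !lift_inord //= !inordK //=. ring.
Qed.
End Det.


Section Det.
Variable R : comNzRingType.
Definition d3 (a : nat -> nat -> R) :=
  a 0%N 0%N * (a 1%N 1%N * a 2%N 2%N - a 1%N 2%N * a 2%N 1%N)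
- a 0%N 1%N * (a 1%N 0%N * a 2%N 2%N - a 1%N 2%N * a 2%N 0%N)
+ a 0%N 2%N * (a 1%N 0%N * a 2%N 1%N - a 1%N 1%N * a 2%N 0%N).
Lemma det3' (A : 'M[R]_3) : \det A = d3 (fun i j => A (inord i) (inord j)).
Proof. by rewrite det3. Qed.
Definition d4 (a : nat -> nat -> R) :=
  a 0%N 0%N * d3 (fun i j => a i.+1 j.+1)
- a 0%N 1%N * d3 (fun i j => a i.+1 (bump 1 j))
+ a 0%N 2%N * d3 (fun i j => a i.+1 (bump 2 j))
- a 0%N 3%N * d3 (fun i j => a i.+1 (bump 3 j)).
Lemma det4 (A : 'M[R]_4) : \det A = d4 (fun i j => A (inord i) (inord j)).
Proof.
rewrite (expand_det_row _ (inord 0)) sum4 /cofactor !det3' /d4 /d3 !mxE.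
rewrite !lift_inord // /bump /= !inordK //= ?addnE /=. ring.
Qed.
End Det.


Lemma inord_eqE n a b : (a <= n)%N -> (b <= n)%N -> (inord a == inord b :> 'I_n.+1) = (a == b).
Proof. by move=> ha hb; rewrite -val_eqE /= !inordK. Qed.

Section Main.
Variable R : realType.

Definition bf (B : 'M[R]_3) : nat -> nat -> R := fun p q => B (inord p) (inord q).

Definition Kf (b : nat -> nat -> R) (i j : nat) : R :=
  match i, j with
  | 0, 0 => b 0%N 0%N + b 1%N 1%N + b 2%N 2%N
  | 1, 1 => b 0%N 0%N - b 1%N 1%N - b 2%N 2%N
  | 2, 2 => - b 0%N 0%N + b 1%N 1%N - b 2%N 2%N
  | 3, 3 => - b 0%N 0%N - b 1%N 1%N + b 2%N 2%N
  | 0, 1 | 1, 0 => b 2%N 1%N - b 1%N 2%N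
  | 0, 2 | 2, 0 => b 0%N 2%N - b 2%N 0%N
  | 0, 3 | 3, 0 => b 1%N 0%N - b 0%N 1%N
  | 1, 2 | 2, 1 => b 0%N 1%N + b 1%N 0%N
  | 1, 3 | 3, 1 => b 0%N 2%N + b 2%N 0%N
  | 2, 3 | 3, 2 => b 1%N 2%N + b 2%N 1%N
  | _, _ => 0
  end.

Definition Kmx (B : 'M[R]_3) : 'M[R]_4 := \matrix_(i < 4, j < 4) Kf (bf B) i j.

Definition e2 (G : 'M[R]_3) : R :=
  G (inord 0) (inord 0) * G (inord 1) (inord 1) - G (inord 0) (inord 1) * G (inord 1) (inord 0)
+ G (inord 0) (inord 0) * G (inord 2) (inord 2) - G (inord 0) (inord 2) * G (inord 2) (inord 0)
+ G (inord 1) (inord 1) * G (inord 2) (inord 2) - G (inord 1) (inord 2) * G (inord 2) (inord 1).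

Lemma charN (c : R) (B : 'M[R]_3) :
  let t := mxtrace (trmx B *m B) in let mm := e2 (trmx B *m B) in let d := \det B in
  char_poly (c%:M - 2 *: Kmx B) =
  ('X - c%:P)^+4 - (8*t)%:P * ('X - c%:P)^+2 + (64*d)%:P * ('X - c%:P)
  + (16*(t^+2 - 4 * mm))%:P.
Proof.
move=> t mm d; rewrite /t /mm /d /e2 /mxtrace /char_poly /char_poly_mx det4 det3 /d4 /d3 /=.
rewrite !sum3 !mxE !sum3 !mxE !inordK // !inord_eqE //= /bf /=.
ring.
Qed.
End Main.


Section Main.
Variable R : realType.

Lemma char3 (A : 'M[R]_3) : char_poly A =
  'X^3 - (\tr A)%:P * 'X^2 + (e2 A)%:P * 'X - (\det A)%:P.
Proof.
rewrite /e2 /mxtrace /char_poly /char_poly_mx !det3 /=.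
rewrite !sum3 !mxE !inord_eqE //=. ring.
Qed.

Lemma newton1 (A : 'M[R]_3) : \tr (A *m A) = (\tr A)^+2 - 2 * e2 A.
Proof. rewrite /e2 /mxtrace !sum3 !mxE !sum3. ring. Qed.

Lemma newton2 (A : 'M[R]_3) : e2 (A *m A) = (e2 A)^+2 - 2 * \tr A * \det A.
Proof. rewrite /e2 /mxtrace det3 !sum3 !mxE !sum3. ring. Qed.

Lemma eigvals_eq n (A : 'M[R]_n) s :
  char_poly A = \prod_(a <- s) ('X - a%:P) -> eigvals A = sort <=%R s.
Proof.
move=> E; rewrite /eigvals; case: pselect => [h|nh]; last first.
  by exfalso; apply: nh; exists s; rewrite /eigseq E.
have [s' + ->] : exists2 s', eigseq A s' & xchoose h = s' by exists (xchoose h); [exact: xchooseP|].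
rewrite /eigseq E => /eqP H; have Hp := prod_XsubC_eq (esym H).
apply/perm_sortP => //; [exact: le_total | exact: le_trans | exact: le_anti].

Qed.
End Main.


Lemma char_poly_similar (F : fieldType) n (P D : 'M[F]_n) : P \in unitmx ->
  char_poly (invmx P *m D *m P) = char_poly D.
Proof.
move=> Pu; rewrite /char_poly /char_poly_mx.
set phi := map_mx (@polyC F).
have -> : 'X%:M - phi (invmx P *m D *m P) = phi (invmx P) *m ('X%:M - phi D) *m phi P.
  rewrite mulmxBr mulmxBl /phi !map_mxM; congr (_ - _).
  by rewrite scalar_mxC -mulmxA -map_mxM mulVmx // map_mx1 mulmx1.
rewrite !det_mulmx mulrC mulrA -det_mulmx -map_mxM mulmxV // map_mx1 det1 mul1r.
by [].
Qed.

Section Main.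
Variable R : realType.

Lemma sym_split n (S : 'M[R]_n) : S^T = S ->
  exists r : seq R, char_poly S = \prod_(z <- r) ('X - z%:P).
Proof.
move=> tS.
set f := real_complex R.
set A := map_mx f S.
have Asym : A \is symmetricmx.
  by apply/is_hermitianmxP; rewrite expr0 scale1r map_mx_id // /A map_trmx tS.
have Areal : A \is a realmx.
  by apply/mxOverP => i j; rewrite /A mxE /f complex_real.
have Aherm := realsym_hermsym Asym Areal.
have /orthomx_spectralP Aeq := hermitian_normalmx Aherm.
have dreal := hermitian_spectral_diag_real Aherm.
set d := spectral_diag A in Aeq dreal.
exists [seq complex.Re (d 0 i) | i <- enum 'I_n].
apply: (@map_poly_inj _ _ f).
rewrite map_char_poly -/A Aeq char_poly_similar ?spectral_unit //.
rewrite char_poly_trig ?diag_mx_is_trig // rmorph_prod big_map big_enum /=.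
apply: eq_bigr => i _; rewrite map_polyXsubC mxE eqxx mulr1n /f.
congr (_ - _%:P); symmetry; exact: (RRe_real (mxOverP dreal 0 i)).
Qed.
End Main.


Section Main.
Variable R : realType.

Lemma qform_unique (D : 'M[R]_4) : D^T = D ->
  (forall w, sqnorm w = 1 -> qform D w = 0) -> D = 0.
Proof.
move=> tD H.
have key : forall a0 a1 a2 a3 : R, a0^+2 + a1^+2 + a2^+2 + a3^+2 = 1 ->
  qform D (\col_(i < 4) nth 0 [:: a0; a1; a2; a3] i) = 0.
  move=> a0 a1 a2 a3 h; apply H; rewrite /sqnorm sum4 !mxE !inordK //=.
have sy : forall a b, D (inord b) (inord a) = D (inord a) (inord b).
  by move=> a b; rewrite -{1}tD mxE.
have G : forall a0 a1 a2 a3 : R, a0^+2 + a1^+2 + a2^+2 + a3^+2 = 1 ->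
  let d := fun a b => D (inord a) (inord b) in
  a0*a0*d 0%N 0%N + a0*a1*d 0%N 1%N + a0*a2*d 0%N 2%N + a0*a3*d 0%N 3%N
  + a1*a0*d 1%N 0%N + a1*a1*d 1%N 1%N + a1*a2*d 1%N 2%N + a1*a3*d 1%N 3%N
  + a2*a0*d 2%N 0%N + a2*a1*d 2%N 1%N + a2*a2*d 2%N 2%N + a2*a3*d 2%N 3%N
  + a3*a0*d 3%N 0%N + a3*a1*d 3%N 1%N + a3*a2*d 3%N 2%N + a3*a3*d 3%N 3%N = 0.
  move=> a0 a1 a2 a3 h d; have := key _ _ _ _ h; rewrite /qform !mxE !sum4 !mxE !sum4 !mxE !inordK //=.
  move=> <-; rewrite /d; ring.
pose T := (3/5 : R); pose U := (4/5 : R).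
have hTU : T^+2 + U^+2 = 1 by rewrite /T /U; field.
have c1 := G 1 0 0 0 ltac:(ring). have c2 := G 0 1 0 0 ltac:(ring).
have c3 := G 0 0 1 0 ltac:(ring). have c4 := G 0 0 0 1 ltac:(ring).
have c5 := G T U 0 0 ltac:(rewrite -hTU; ring). have c6 := G T 0 U 0 ltac:(rewrite -hTU; ring).
have c7 := G T 0 0 U ltac:(rewrite -hTU; ring). have c8 := G 0 T U 0 ltac:(rewrite -hTU; ring).
have c9 := G 0 T 0 U ltac:(rewrite -hTU; ring). have c10 := G 0 0 T U ltac:(rewrite -hTU; ring).
move: c1 c2 c3 c4 c5 c6 c7 c8 c9 c10; cbv beta zeta; move=> c1 c2 c3 c4 c5 c6 c7 c8 c9 c10.
have s01 := sy 0%N 1%N. have s02 := sy 0%N 2%N. have s03 := sy 0%N 3%N.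
have s12 := sy 1%N 2%N. have s13 := sy 1%N 3%N. have s23 := sy 2%N 3%N.
have eT : T = 3/5 by []. have eU : U = 4/5 by [].
rewrite eT eU in c5 c6 c7 c8 c9 c10.
apply/matrixP => i j; rewrite mxE -(inord_val i) -(inord_val j).
case: i j => [[|[|[|[|?]]]] hi] [[|[|[|[|?]]]] hj] //=; lra.
Qed.
End Main.


Lemma inord01 : (inord 0 : 'I_1) = 0.
Proof. by apply/val_inj; rewrite /= inordK. Qed.

Section Main.
Variable R : realType.

Definition Pexp (R0 : 'M[R]_3) (x : 'cV[R]_3) : 'M[R]_4 :=
  \matrix_(i < 4, j < 4) (2 * sqnorm x * ((i : nat) == j)%:R - 2 * Kf (bf (R0 *m x *m x^T)) i j).

Lemma sqnorm_tr n (v : 'cV[R]_n) : sqnorm v = (v^T *m v) 0 0.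
Proof. by rewrite /sqnorm mxE; apply: eq_bigr => k _; rewrite !mxE expr2. Qed.

Lemma Pexp_sym R0 x : (Pexp R0 x)^T = Pexp R0 x.
Proof.
apply/matrixP => i j; rewrite !mxE eq_sym; congr (_ - 2 * _).
by case: i j => [[|[|[|[|?]]]] ?] [[|[|[|[|?]]]] ?].
Qed.

Lemma Pexp_q R0 x w : is_SO3 R0 -> sqnorm w = 1 ->
  qform (Pexp R0 x) w = sqnorm (R0 *m x - quatR w *m x).
Proof.
move=> [oR0 _] hw.
have ny : sqnorm (R0 *m x) = sqnorm x.
  by rewrite !sqnorm_tr trmx_mul -mulmxA (mulmxA R0^T) oR0 mul1mx.
rewrite /Pexp; move: (R0 *m x) ny => y ny.
set cross := \sum_(a < 3) \sum_(b < 3) y a 0 * quatR w a b * x b 0.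
have eR : sqnorm (y - quatR w *m x) = sqnorm y - 2 * cross + sqnorm w ^+ 2 * sqnorm x.
  rewrite /cross /sqnorm !sum3 !sum4 !mxE !sum3 !mxE !inordK //=. ring.
have eL : qform (\matrix_(i < 4, j < 4) (2 * sqnorm x * ((i : nat) == j)%:R
     - 2 * Kf (bf (y *m x^T)) i j)) w = 2 * sqnorm x * sqnorm w - 2 * cross.
  rewrite /cross /qform /sqnorm /bf !(sum3, sum4, mxE) !inordK //=.
  rewrite !(sum1, mxE) !inord01 //=. ring.
by rewrite eL eR hw ny; ring.
Qed.
End Main.


Section Main.
Variable R : realType.

Lemma Kf_sum (I : Type) (r : seq I) (f : I -> nat -> nat -> R) i j :
  Kf (fun p q => \sum_(k <- r) f k p q) i j = \sum_(k <- r) Kf (f k) i j.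
Proof.
case: i => [|[|[|[|i]]]]; case: j => [|[|[|[|j]]]];
  by rewrite /= ?(sumrB, big_split, sumrN, big1_eq).
Qed.

Lemma qformB n (A B : 'M[R]_n) w : qform (A - B) w = qform A w - qform B w.
Proof. by rewrite /qform mulmxBr mulmxBl !mxE. Qed.

Lemma coef3 (p0 p1 p2 q0 q1 q2 : R) :
  'X^3 + p2%:P * 'X^2 + p1%:P * 'X + p0%:P = 'X^3 + q2%:P * 'X^2 + q1%:P * 'X + q0%:P ->
  [/\ p0 = q0, p1 = q1 & p2 = q2].
Proof.
move=> E; have c k := congr1 (fun p : {poly R} => p`_k) E.
have := c 0%N; have := c 1%N; have := c 2%N.
rewrite /= !(coefD, coefCM, coefXn, coefX, coefC) /=.
move=> h2 h1 h0; split; lra.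
Qed.

Lemma tr_outer (v : 'cV[R]_3) : \tr (v *m v^T) = sqnorm v.
Proof. by rewrite mxtrace_mulC sqnorm_tr /mxtrace big_ord1. Qed.

Lemma sorted4 (a b c : R) : 0 <= a -> a <= b -> b <= c ->
  sort <=%R [:: 0; 4 * (a + b); 4 * (a + c); 4 * (b + c)] = [:: 0; 4 * (a + b); 4 * (a + c); 4 * (b + c)].
Proof.
move=> ha hab hbc; apply: sorted_sort; first exact: le_trans.
rewrite /= !andbT; apply/and3P; split; lra.
Qed.

Lemma sorted3 (a b c : R) : a <= b -> b <= c ->
  sort <=%R [:: 4 * a; 4 * b; 4 * c] = [:: 4 * a; 4 * b; 4 * c].
Proof.
move=> hab hbc; apply: sorted_sort; first exact: le_trans.
rewrite /= !andbT; apply/andP; split; lra.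
Qed.
End Main.


Unset Implicit Arguments.

Theorem lemma4p5 (R : realType) (R0 : 'M[R]_3) (l : nat)
    (x : 'I_l -> 'cV[R]_3) (P : 'I_l -> 'M[R]_4) :
  is_SO3 R0 ->
  (forall i, (P i)^T = P i) ->
  (forall i (w : 'cV[R]_4), sqnorm w = 1 ->
     qform (P i) w = sqnorm (R0 *m x i - quatR w *m x i)) ->
  lambda_min2 (\sum_(i < l) P i) =
    \sum_(i < l) 4 * sqnorm (x i)
    - lambda_max (\sum_(i < l) (4 : R) *: (x i *m (x i)^T)).
Proof.
move=> hSO Psym Hq.
set S := \sum_(i < l) x i *m (x i)^T.
have St : S^T = S.
  by rewrite /S raddf_sum; apply: eq_bigr => i _ /=; rewrite trmx_mul trmxK.
have trS : \tr S = \sum_(i < l) sqnorm (x i).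
  by rewrite /S raddf_sum; apply: eq_bigr => i _ /=; rewrite tr_outer.
have PE : forall i, P i = Pexp R0 (x i).
  move=> i; apply/eqP; rewrite -subr_eq0; apply/eqP; apply: qform_unique.
    by rewrite raddfB /= Psym Pexp_sym.
  by move=> w hw; rewrite qformB Hq // Pexp_q // subrr.
have bfS : bf (R0 *m S) = fun p q => \sum_(k < l) bf (R0 *m x k *m (x k)^T) p q.
  by apply: funext => p; apply: funext => q; rewrite /bf /S mulmx_sumr summxE;
    apply: eq_bigr => k _; rewrite mulmxA.
have sumP : \sum_(i < l) P i = (2 * \tr S)%:M - 2 *: Kmx (R0 *m S).
  rewrite (eq_bigr _ (fun i _ => PE i)); apply/matrixP => i j.
  rewrite summxE !mxE bfS Kf_sum trS.
  under eq_bigr do rewrite mxE.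
  rewrite sumrB; congr (_ - _); first by rewrite -mulr_suml -mulr_sumr mulr_natr.
  by rewrite mulr_sumr.
have [oR0 dR0] := hSO.
have tB : \tr ((R0 *m S)^T *m (R0 *m S)) = \tr (S *m S).
  by rewrite trmx_mul -mulmxA (mulmxA R0^T) oR0 mul1mx St.
have eB : e2 ((R0 *m S)^T *m (R0 *m S)) = e2 (S *m S).
  by rewrite trmx_mul -mulmxA (mulmxA R0^T) oR0 mul1mx St.
have dB : \det (R0 *m S) = \det S by rewrite det_mulmx dR0 mul1r.
have [r hr] := sym_split St.
have sz : size r = 3%N.
  by have := size_char_poly S; rewrite hr size_prod_XsubC => -[].
pose r' := sort <=%R r.
have pr : perm_eq r' r by rewrite perm_sort.
have hr' : char_poly S = \prod_(z <- r') ('X - z%:P) by rewrite hr (perm_big _ pr).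
have sr' : sorted <=%R r' := sort_sorted (@le_total _ R) r.
have sz' : size r' = 3%N by rewrite size_sort.
clear pr; move: r' hr' sr' sz' => r'; case: r' => [|a [|b [|c [|? ?]]]] // hr' sr' _.
move: sr' => /= /and3P [hab hbc _].
have E2 : 'X^3 + (- \tr S)%:P * 'X^2 + (e2 S)%:P * 'X + (- \det S)%:P =
          'X^3 + (- (a + b + c))%:P * 'X^2 + (a*b + a*c + b*c)%:P * 'X + (- (a*b*c))%:P.
  have e1 : 'X^3 + (- \tr S)%:P * 'X^2 + (e2 S)%:P * 'X + (- \det S)%:P = char_poly S.
    by rewrite char3; ring.
  have e3 : 'X^3 + (- (a + b + c))%:P * 'X^2 + (a*b + a*c + b*c)%:P * 'X + (- (a*b*c))%:P = char_poly S.
    by rewrite hr' !big_cons big_nil; ring.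
  by rewrite e1 e3.
have [h0 h1 h2] := coef3 E2.
have ha : 0 <= a.
  have : root (char_poly S) a by rewrite hr' root_prod_XsubC mem_head.
  rewrite -eigenvalue_root_char => /eigenvalueP [v hv vn0].
  have q1 : (v *m S *m v^T) 0 0 = a * (v *m v^T) 0 0 by rewrite hv -scalemxAl mxE.
  have q2 : 0 <= (v *m S *m v^T) 0 0.
    rewrite /S mulmx_sumr mulmx_suml summxE; apply: sumr_ge0 => k _.
    rewrite mulmxA -mulmxA -trmx_mul mxE big_ord1 [_^T _ _]mxE -expr2; exact: sqr_ge0.
  have q3 : 0 < (v *m v^T) 0 0.
    rewrite -[v in v *m _]trmxK -sqnorm_tr lt_def; apply/andP; split; last first.
      by apply: sumr_ge0 => k _; exact: sqr_ge0.
    apply/negP => /eqP h; move/eqP: vn0; apply; apply/rowP => k.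
    have := @psumr_eq0P _ _ xpredT (fun i => v^T i 0 ^+ 2) (fun i _ => sqr_ge0 _) h k isT.
    by rewrite mxE => /eqP; rewrite sqrf_eq0 => /eqP ->; rewrite mxE.
  by rewrite -(pmulr_lge0 _ q3) -q1.
have charP : char_poly (\sum_(i < l) P i) =
    \prod_(z <- [:: 0; 4 * (a + b); 4 * (a + c); 4 * (b + c)]) ('X - z%:P).
  rewrite sumP charN tB eB dB newton1 newton2.
  have -> : \tr S = a + b + c by lra.
  have -> : e2 S = a*b + a*c + b*c by lra.
  have -> : \det S = a*b*c by lra.
  rewrite !big_cons big_nil; ring.
have S4 : \sum_(i < l) (4 : R) *: (x i *m (x i)^T) = 4 *: S by rewrite scaler_sumr.
have e4 : e2 ((4 : R) *: S) = 16 * e2 S by rewrite /e2 !mxE; ring.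
have char4 : char_poly ((4 : R) *: S) = \prod_(z <- [:: 4 * a; 4 * b; 4 * c]) ('X - z%:P).
  rewrite char3 mxtraceZ detZ e4.
  have -> : \tr S = a + b + c by lra.
  have -> : e2 S = a*b + a*c + b*c by lra.
  have -> : \det S = a*b*c by lra.
  rewrite !big_cons big_nil; ring.
rewrite /lambda_min2 /lambda_max S4 (eigvals_eq charP) (eigvals_eq char4) sorted4 //.
rewrite sorted3 // /= -mulr_sumr -trS.
have -> : \tr S = a + b + c by lra.
ring.
Qed.
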